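(* If a formula $\varphi$ is satisfiable in a PWK-Kripke model, then it is satisfiable in a PWK-Kripke model $(W,R,v)$ with $W$ finite.
   Context: Formulas are built from a countably infinite set of propositional variables and the constants $0,1$ using the unary connectives $\neg$, $J_2$, $\Box$ and the binary connective $\vee$. Let $\mathbf{WK}^e$ be the algebra on $\{0,\tfrac12,1\}$ with $\neg0=1$, $\neg1=0$, $\neg\tfrac12=\tfrac12$; $a\vee b=\tfrac12$ if $a=\tfrac12$ or $b=\tfrac12$, otherwise $a\vee b=\max(a,b)$; $J_2(1)=1$, $J_2(\tfrac12)=J_2(0)=0$. A PWK-Kripke model is a triple $(W,R,v)$ with $W\neq\emptyset$, $R\subseteq W\times W$, $v:W\times\mathrm{Fm}\to\{0,\tfrac12,1\}$ such that for each $w$, $v(w,\cdot)$ commutes with $\neg,\vee,J_2,0,1$ as computed in $\mathbf{WK}^e$, and: $v(w,\Box\varphi)=\tfrac12$ iff $v(w,\varphi)=\tfrac12$; $v(w,\Box\varphi)=1$ iff $v(w,\varphi)\neq\tfrac12$ and $v(s,\varphi)\neq0$ for all $s$ with $wRs$; $v(w,\Box\varphi)=0$ iff $v(w,\varphi)\neq\tfrac12$ and $v(s,\varphi)=0$ for some $s$ with $wRs$. A formula $\varphi$ is satisfiable in a PWK-Kripke model $(W,R,v)$ if $v(w,\varphi)\neq0$ for some $w\in W$. *)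

(* Defs.v *)
From mathcomp Require Import all_boot.

(* Truth values of WK^e: 0, 1/2, 1 *)
Inductive wk := W0 | Wh | W1.

Definition wk_neg (a : wk) : wk :=
  match a with W0 => W1 | Wh => Wh | W1 => W0 end.

Definition wk_or (a b : wk) : wk :=
  match a, b with
  | Wh, _ | _, Wh => Wh
  | W1, _ | _, W1 => W1
  | W0, W0 => W0
  end.

Definition wk_J2 (a : wk) : wk :=
  match a with W1 => W1 | _ => W0 end.

Inductive Fm :=
  | FVar : nat -> Fm
  | FZero : Fm
  | FOne : Fm
  | FNeg : Fm -> Fm
  | FJ2 : Fm -> Fm
  | FBox : Fm -> Fm
  | FOr : Fm -> Fm -> Fm.

Definition PWK_model (W : Type) (R : W -> W -> Prop) (v : W -> Fm -> wk) : Prop :=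
  inhabited W /\
  forall w : W,
    v w FZero = W0 /\ v w FOne = W1 /\
    (forall phi, v w (FNeg phi) = wk_neg (v w phi)) /\
    (forall phi, v w (FJ2 phi) = wk_J2 (v w phi)) /\
    (forall phi psi, v w (FOr phi psi) = wk_or (v w phi) (v w psi)) /\
    (forall phi,
       (v w (FBox phi) = Wh <-> v w phi = Wh) /\
       (v w (FBox phi) = W1 <-> (v w phi <> Wh /\ forall s, R w s -> v s phi <> W0)) /\
       (v w (FBox phi) = W0 <-> (v w phi <> Wh /\ exists s, R w s /\ v s phi = W0))).

Definition satisfiable_in (W : Type) (R : W -> W -> Prop) (v : W -> Fm -> wk)
  (phi : Fm) : Prop :=
  exists w : W, v w phi <> W0.

(* Main.v *)
Require Import Defs.
From HB Require Import structures.
From mathcomp Require Import all_boot.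
From Stdlib Require Import ClassicalEpsilon.

Definition wk2o (a : wk) : option bool :=
  match a with W0 => None | Wh => Some false | W1 => Some true end.
Definition o2wk (o : option bool) : wk :=
  match o with None => W0 | Some false => Wh | Some true => W1 end.
Lemma wk2oK : cancel wk2o o2wk. Proof. by case. Qed.
HB.instance Definition _ := Equality.copy wk (can_type wk2oK).
HB.instance Definition _ := Choice.copy wk (can_type wk2oK).
HB.instance Definition _ := Countable.copy wk (can_type wk2oK).
HB.instance Definition _ := Finite.copy wk (can_type wk2oK).

Definition Fm_dec (a b : Fm) : {a = b} + {a <> b}.
Proof. decide equality; apply PeanoNat.Nat.eq_dec. Defined.
HB.instance Definition _ := comparableMixin Fm_dec.

Fixpoint sub (f : Fm) : seq Fm :=
  f :: match f with
       | FNeg g | FJ2 g | FBox g => sub g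
       | FOr g h => sub g ++ sub h
       | _ => [::]
       end.

Lemma sub_self f : f \in sub f.
Proof. by case: f => *; rewrite inE eqxx. Qed.

Lemma sub_trans f g : g \in sub f -> {subset sub g <= sub f}.
Proof.
elim: f => [n|||a IH|a IH|a IH|a IHa b IHb] /=; rewrite inE;
  try (by move/eqP=> -> );
  try (case/orP=> [/eqP -> //|H] x Hx; rewrite inE (IH H x Hx) orbT //).
case/orP=> [/eqP -> //|]; rewrite mem_cat => /orP [H|H] x Hx;
  by rewrite inE mem_cat ?(IHa H x Hx) ?(IHb H x Hx) !orbT.
Qed.

Section Filt.
Variables (W : Type) (R : W -> W -> Prop) (v : W -> Fm -> wk) (phi : Fm).
Hypothesis HM : PWK_model W R v.

Let sf := sub phi.
Definition T := (size sf).-tuple wk.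
Definition tp (w : W) : T := map_tuple (v w) (in_tuple sf).
Definition R' (t s : T) : Prop := exists w u, tp w = t /\ tp u = s /\ R w u.

Fixpoint vv (f : Fm) (t : T) : wk :=
  match f with
  | FVar n => nth W0 t (index (FVar n) sf)
  | FZero => W0
  | FOne => W1
  | FNeg g => wk_neg (vv g t)
  | FJ2 g => wk_J2 (vv g t)
  | FOr g h => wk_or (vv g t) (vv h t)
  | FBox g => if vv g t == Wh then Wh else
      if excluded_middle_informative (exists s, R' t s /\ vv g s = W0) then W0 else W1
  end.

Lemma tp_eq w u f : f \in sf -> tp w = tp u -> v w f = v u f.
Proof.
move=> Hf /(congr1 (fun t : T => nth W0 t (index f sf))) /=.
by rewrite !(nth_map FZero) ?index_mem // nth_index.
Qed.

Lemma vv_tp f : {subset sub f <= sf} -> forall w, vv f (tp w) = v w f.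
Proof.
elim: f => [n|||a IH|a IH|a IH|a IHa b IHb] Hs w /=.
- by rewrite (nth_map FZero) ?index_mem ?nth_index //; apply: Hs; rewrite inE eqxx.
- by have [_ /(_ w) []] := HM.
- by have [_ /(_ w) [_ []]] := HM.
- have [_ /(_ w) [_ [_ [-> _]]]] := HM.
  by rewrite IH // => x Hx; apply: Hs; rewrite inE Hx orbT.
- have [_ /(_ w) [_ [_ [_ [-> _]]]]] := HM.
  by rewrite IH // => x Hx; apply: Hs; rewrite inE Hx orbT.
- have [_ HMw] := HM.
  have Ha : {subset sub a <= sf} by move=> x Hx; apply: Hs; rewrite inE Hx orbT.
  have HB : FBox a \in sf by apply: Hs; rewrite inE eqxx.
  have HA : a \in sf by apply: Ha; apply: sub_self.
  have [_ [_ [_ [_ [_ /(_ a) [[Hh1 Hh2] [[H11 H12] [H01 H02]]]]]]]] := HMw w.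
  rewrite IH //.
  case: eqP => [Hw|Hw]; first by rewrite Hh2.
  case: excluded_middle_informative => [[s [[w' [u' [E1 [E2 Rwu]]]] Hs0]]|Hn].
  + have [_ [_ [_ [_ [_ /(_ a) [_ [_ [_ H02']]]]]]]] := HMw w'.
    rewrite -(tp_eq _ _ _ HB E1) H02' //; split; first by rewrite (tp_eq _ _ _ HA E1).
    by exists u'; split=> //; rewrite -IH // E2.
  + symmetry; apply: H12; split=> // s Rws Hs0; apply: Hn; exists (tp s); split.
      by exists w, s.
    by rewrite IH.
- have Hsa : {subset sub a <= sf} by move=> x Hx; apply: Hs; rewrite inE mem_cat Hx orbT.
  have Hsb : {subset sub b <= sf} by move=> x Hx; apply: Hs; rewrite inE mem_cat Hx !orbT.
  have [_ /(_ w) [_ [_ [_ [_ [-> _]]]]]] := HM.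
  by rewrite IHa // IHb.
Qed.

Lemma vv_model : PWK_model T R' (fun t f => vv f t).
Proof.
have [[w0] _] := HM.
split; first by constructor; exact: tp w0.
move=> t; do 5 (split; first by []).
move=> g /=; case: eqP => [->|Hg].
  by split; [tauto | split; split; try discriminate; case].
case: excluded_middle_informative => [Hex|Hn] /=.
  split; [split=> // H; case: Hg | split].
    split=> //; case=> _ H; case: Hex => s [Rs Hs]; case: (H s Rs Hs).
  split=> // _; split=> //.
split; [split=> // H; case: Hg | split].
  split=> // _; split=> // s Rs Hs; apply: Hn; by exists s.
split=> //; by case=> _ Hex.
Qed.

End Filt.

Theorem mainTheorem12 (phi : Fm) :
  (exists (W : Type) (R : W -> W -> Prop) (v : W -> Fm -> wk),
      PWK_model W R v /\ satisfiable_in W R v phi) ->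
  exists (W : finType) (R : W -> W -> Prop) (v : W -> Fm -> wk),
      PWK_model W R v /\ satisfiable_in W R v phi.
Proof.
case=> W [R [v [HM [w Hw]]]].
exists (T phi), (@R' W R v phi), (fun t f => @vv W R v phi f t); split; first exact: vv_model.
exists (@tp W v phi w); rewrite (@vv_tp W R v phi HM phi) //; by move=> x.
Qed.
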